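(* If $X$ is a non-scattered Tychonoff space, then its Stone–Čech compactification $\beta X$ is not a $\Delta$-space.
   Context: A space is scattered if every nonempty subset has a point isolated in that subset. A topological space $X$ is a $\Delta$-space if for every decreasing sequence $\{D_n:n\in\omega\}$ of subsets of $X$ with $\bigcap_n D_n=\emptyset$ there is a decreasing sequence $\{V_n:n\in\omega\}$ of open subsets of $X$ with $D_n\subseteq V_n$ for all $n$ and $\bigcap_n V_n=\emptyset$. *)

(* Defs.v *)
From HB Require Import structures.
From mathcomp Require Import all_boot all_order all_algebra.
From mathcomp Require Import all_classical all_reals all_analysis.
From mathcomp Require Import Rstruct Rstruct_topology.
From Stdlib Require Import Rdefinitions.

Set Implicit Arguments.
Unset Strict Implicit.
Unset Printing Implicit Defensive.

Import Order.TTheory GRing.Theory Num.Theory.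
Local Open Scope classical_set_scope.

Definition scattered (X : topologicalType) : Prop :=
  forall A : set X, A !=set0 -> exists x, isolated A x.

Definition tychonoff_space (X : topologicalType) : Prop :=
  accessible_space X /\
  forall (x : X) (B : set X), closed B -> ~ B x ->
    exists f : X -> R, [/\ continuous f, f x = 0%R & forall y, B y -> f y = 1%R].

Definition delta_space (X : topologicalType) : Prop :=
  forall D : nat -> set X,
    (forall n, D n.+1 `<=` D n) ->
    \bigcap_n D n = set0 ->
    exists V : nat -> set X,
      [/\ forall n, open (V n),
          forall n, V n.+1 `<=` V n,
          forall n, D n `<=` V n &
          \bigcap_n V n = set0].

Definition embedding (X K : topologicalType) (e : X -> K) : Prop :=
  [/\ injective e, continuous e &
      forall U : set X, open U -> exists W : set K, open W /\ e @^-1` W = U].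

(* This characterizes beta X
   up to homeomorphism. *)
Definition stone_cech (X K : topologicalType) (e : X -> K) : Prop :=
  [/\ compact [set: K], hausdorff_space K, embedding e, dense (range e) &
      forall (Y : topologicalType), compact [set: Y] -> hausdorff_space Y ->
        forall f : X -> Y, continuous f ->
          exists g : K -> Y, continuous g /\ forall x, g (e x) = f x].

(* Main.v *)
Require Import Defs.
From HB Require Import structures.
From mathcomp Require Import all_boot all_order all_algebra.
From mathcomp Require Import all_classical all_reals all_analysis.
Import Order.TTheory GRing.Theory Num.Theory.
Local Open Scope classical_set_scope.

Lemma antiW {K : Type} {W : nat -> set K} :
  (forall n, W n.+1 `<=` W n) -> forall n m, (n <= m)%N -> W m `<=` W n.
Proof.
move=> h n m /subnK <-; elim: (m - n)%N => [|k ih] //=.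
by rewrite addSn; apply: subset_trans (h _) ih.
Qed.

Lemma nested (K : topologicalType) (W : nat -> set K) : compact [set: K] ->
  (forall n, closed (W n)) -> (forall n, W n.+1 `<=` W n) ->
  (forall n, W n !=set0) -> \bigcap_n W n !=set0.
Proof.
move=> cK cW dW nW.
have FF : ProperFilter (filter_from [set: nat] W).
  apply: filter_from_proper => [|i _]; last exact: nW.
  apply: filter_fromT_filter; first by exists 0%N.
  move=> i j; exists (maxn i j) => x Wx; split.
    exact: (antiW dW _ _ (leq_maxl i j) _ Wx).
  exact: (antiW dW _ _ (leq_maxr i j) _ Wx).
have [p [_ cp]] := cK _ FF (ltac:(by exists 0%N)).
exists p => n _; rewrite clusterE in cp.
have -> : W n = closure (W n) by apply/closure_id.
by apply: cp; exists n.
Qed.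
Lemma regular_open (K : topologicalType) (a : K) (U : set K) :
  compact [set: K] -> hausdorff_space K -> open U -> U a ->
  exists O, [/\ open O, O a & closure O `<=` U].
Proof.
move=> cK hK oU Ua.
have nT : nbhs a [set: K] by apply: filterT.
have := @compact_regular K a setT hK cK nT.
move=> /(_ U (open_nbhs_nbhs (conj oU Ua))) [N Na NU].
exists N°; split; [exact: open_interior| exact: Na|].
exact: subset_trans (closureS (@interior_subset _ N)) NU.
Qed.

Lemma split_open (K : topologicalType) (A : set K) :
  compact [set: K] -> hausdorff_space K -> (forall y, ~ isolated A y) ->
  forall U, open U -> U `&` A !=set0 ->
  exists U0 U1 : set K, [/\ open U0 /\ open U1, U0 `&` A !=set0 /\ U1 `&` A !=set0,
    closure U0 `<=` U /\ closure U1 `<=` U & closure U0 `&` closure U1 = set0].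
Proof.
move=> cK hK nI U oU [a [Ua Aa]].
have [b [Ub Ab ba]] : exists b, [/\ U b, A b & b != a].
  apply: contrapT => nb; apply: (nI a); split; first by rewrite inE.
  exists U; first exact: open_nbhs_nbhs.
  apply/seteqP; split => [x [Ux Ax]|x ->] //=.
  by apply/eqP; apply: contrapT => xa; apply: nb; exists x; split => //; apply/negP.
move: (hK); rewrite open_hausdorff => /(_ a b); rewrite eq_sym => /(_ ba).
move=> [[Ga Gb]] /= [/set_mem Gaa /set_mem Gbb] [oGa oGb /eqP GG].
have [Oa [oOa Oaa cOa]] := @regular_open K _ _ cK hK (openI oU oGa) (conj Ua Gaa).
have [Ob [oOb Obb cOb]] := @regular_open K _ _ cK hK (openI oU oGb) (conj Ub Gbb).
exists Oa, Ob; split.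
- by [].
- by split; [exists a | exists b].
- by split => x /[dup] ? ; [move/cOa => [] | move/cOb => []].
- apply/seteqP; split => // x [/cOa [_ ?] /cOb [_ ?]].
  by rewrite -GG.
Qed.
Lemma nseq_true_inj (k k' : nat) (u u' : seq bool) :
  nseq k false ++ true :: u = nseq k' false ++ true :: u' -> k = k' /\ u = u'.
Proof.
elim: k k' => [|k ih] [|k'] //=; first by case.
by case=> /ih [-> ->].
Qed.

Lemma main_K (K : topologicalType) (A : set K) : compact [set: K] ->
  hausdorff_space K -> A !=set0 -> (forall y, ~ isolated A y) ->
  ~ delta_space K.
Proof.
move=> cK hK [a0 Aa0] nI dK.
have hsp : forall U : set K, exists f : bool -> set K,
    open U /\ U `&` A !=set0 ->
    [/\ open (f false) /\ open (f true), f false `&` A !=set0 /\ f true `&` A !=set0,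
    closure (f false) `<=` U /\ closure (f true) `<=` U &
    closure (f false) `&` closure (f true) = set0].
  move=> U; have [[oU UA]|nU] := pselect (open U /\ U `&` A !=set0).
    have [U0 [U1 H]] := @split_open K A cK hK nI U oU UA.
    by exists (fun b => if b then U1 else U0).
  by exists (fun _ => U).
have [sp hsp'] := choice hsp.
pose U (s : seq bool) := foldr (fun b V => sp V b) setT s.
pose W s := closure (U s).
have inv : forall s, open (U s) /\ U s `&` A !=set0.
  elim=> [|b s [oU UA]] /=; first by split; [exact: openT | exists a0].
  have [[? ?] [? ?] _ _] := hsp' _ (conj oU UA).
  by case: b.
have WU : forall b s, W (b :: s) `<=` U s.
  move=> b s; have [_ _ [? ?] _] := hsp' _ (inv s).
  by case: b.
have Wc : forall b s, W (b :: s) `<=` W s.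
  by move=> b s x /WU; apply: subset_closure.
have Wd : forall s, W (false :: s) `&` W (true :: s) = set0.
  by move=> s; have [_ _ _ ?] := hsp' _ (inv s).
have Wcl : forall s, closed (W s) by move=> s; exact: closed_closure.
have Wn : forall s, W s !=set0.
  move=> s; have [_ [x [Ux _]]] := inv s; exists x; exact: subset_closure.
have WS : forall a s, W (a ++ s) `<=` W s.
  elim=> [|b a ih] s //= x /Wc; exact: ih.
have Wsize : forall u u' x, size u = size u' -> W u x -> W u' x -> u = u'.
  elim=> [|b u ih] [|b' u'] x //= [sz] Wx Wx'.
  have ee := ih _ _ sz (Wc _ _ _ Wx) (Wc _ _ _ Wx'); subst u'.
  case: b b' Wx Wx' => -[] // Wx Wx'.
    by have : set0 x by rewrite -(Wd u); split.
  by have : set0 x by rewrite -(Wd u); split.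
pose P t := \bigcap_k W (nseq k false ++ t).
have Pinj : forall t t' x, P (true :: t) x -> P (true :: t') x -> t = t'.
  move=> t t' x Px Px'.
  have sz : size (nseq (size t').+1 false ++ true :: t) =
            size (nseq (size t).+1 false ++ true :: t').
    by rewrite !size_cat !size_nseq /= addnC.
  have := Wsize _ _ x sz (Px (size t').+1 I) (Px' (size t).+1 I).
  by move/nseq_true_inj => [].
pose D n := \bigcup_(t in [set t : seq bool | (n <= size t)%N]) P (true :: t).
have Dd : forall n, D n.+1 `<=` D n.
  move=> n x [t /= nt Px]; exists t => //=; exact: ltnW.
have D0 : \bigcap_n D n = set0.
  apply/seteqP; split => // x Dx.
  have [t _ Px] := Dx 0%N I.
  have [t' /= tt' Px'] := Dx (size t).+1 I.
  have e := Pinj _ _ _ Px Px'; subst t'.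
  by rewrite ltnn in tt'.
have [V [oV dV DV V0]] := dK D Dd D0.
have step : forall n s, exists k,
    W (nseq k false ++ true :: (nseq n false ++ s)) `<=` V n.
  move=> n s; apply: contrapT => nk.
  pose Z k := W (nseq k false ++ true :: (nseq n false ++ s)) `&` ~` V n.
  have [|||x Zx] := @nested K Z cK.
  - move=> k; apply: closedI => //; rewrite closedC; exact: oV.
  - by move=> k y [Wy Vy]; split => //; exact: Wc Wy.
  - move=> k; apply: contrapT => Zk; apply: nk; exists k => y Wy.
    apply: contrapT => Vy; apply: Zk; by exists y.
  apply: (proj2 (Zx 0%N I)); apply: DV.
  exists (nseq n false ++ s); first by rewrite /= size_cat size_nseq leq_addr.
  by move=> k _; exact: (proj1 (Zx k I)).
have step' : forall n, exists f : seq bool -> nat, forall s,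
    W (nseq (f s) false ++ true :: (nseq n false ++ s)) `<=` V n.
  by move=> n; have [f hf] := choice (step n); exists f.
have [kf hkf] := choice step'.
pose S := fix S n := if n is n'.+1 then
  nseq (kf n' (S n')) false ++ true :: (nseq n' false ++ S n') else [::].
have SV : forall n, W (S n.+1) `<=` V n by move=> n; exact: hkf.
have Sd : forall n, W (S n.+1) `<=` W (S n).
  move=> n; have -> : S n.+1 =
    (nseq (kf n (S n)) false ++ true :: nseq n false) ++ S n by rewrite -catA.
  exact: WS.
have [x Sx] := @nested K (fun n => W (S n)) cK (fun n => Wcl _) Sd (fun n => Wn _).
have : set0 x by rewrite -V0 => n _; apply: SV; exact: Sx.
by [].
Qed.

Theorem corollary3p15 (X : topologicalType) :
  tychonoff_space X -> ~ scattered X ->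
  forall (K : topologicalType) (e : X -> K), stone_cech e -> ~ delta_space K.
Proof.
move=> _ nS K e [cK hK [ie ce _] _ _].
have [A [An nI]] : exists A : set X, A !=set0 /\ forall x, ~ isolated A x.
  apply: contrapT => H; apply: nS => A An; apply: contrapT => h.
  by apply: H; exists A; split => // x ix; apply: h; exists x.
apply: (@main_K K (e @` A) cK hK).
  by have [a Aa] := An; exists (e a), a.
move=> y [/set_mem [a Aa <-] [V nV VA]].
apply: (nI a); split; first by rewrite inE.
exists (e @^-1` V); first exact: ce a _ nV.
apply/seteqP; split => [z [Vz Az]|z ->] /=.
  have : [set e a] (e z) by rewrite -VA; split => //; exists z.
  by move=> /= /ie.
have : [set e a] (e a) by [].
by rewrite -VA => -[].
Qed.
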